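(* Let $\ell$ be an integer with $\ell\ge 6$. Then the integer program $$\text{minimize } x+2y+3z \quad\text{subject to}\quad x+y+z-s=\binom{\ell}{2}-\ell,\quad x\le \binom{s}{2},\quad x,y,z,s\in\mathbb{N}$$ has a unique optimal solution, namely $x=\binom{\ell}{2}$, $y=0$, $z=0$, $s=\ell$.
   Context: $\mathbb{N}$ denotes the set of non-negative integers, and $\binom{s}{2}=s(s-1)/2$. *)

(* Defs.v *)
From mathcomp Require Import all_boot.
Set Implicit Arguments. Unset Strict Implicit. Unset Printing Implicit Defensive.

(* The equation
   x + y + z - s = C(l,2) - l is an integer equation; since l >= 3 gives
   C(l,2) >= l, it is equivalently written in nat as x + y + z = (C(l,2) - l) + s. *)
Definition feasible (l x y z s : nat) : Prop :=
  x + y + z = ('C(l, 2) - l) + s /\ x <= 'C(s, 2).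

Definition objective (x y z : nat) : nat := x + 2 * y + 3 * z.

Definition optimal (l x y z s : nat) : Prop :=
  feasible l x y z s /\
  forall x' y' z' s', feasible l x' y' z' s' -> objective x y z <= objective x' y' z'.

(* Main.v *)
Require Import Defs.
From mathcomp Require Import all_boot.
From mathcomp Require Import zify.

Lemma two_bin2 n : 2 * 'C(n, 2) = n * (n - 1).
Proof.
elim: n => [|n IH] //. rewrite binS bin1. nia.
Qed.

Lemma key l x y z s : 6 <= l -> feasible l x y z s ->
  'C(l, 2) <= objective x y z /\
  ('C(l, 2) = objective x y z -> (x, y, z, s) = ('C(l, 2), 0, 0, l)).
Proof.
move=> hl [he hx]; rewrite /objective.
have hb := two_bin2 l; have hc := two_bin2 s.
have hlb : l <= 'C(l, 2) by nia.
have [hsl|hsl] := ltnP s l.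
  have hlt : s * (s - 1) < l * (l - 1) - 4 * l + 4 * s by nia.
  split; first nia. nia.
split; first nia.
move=> heq.
have hs : s = l by nia.
have hy : y = 0 by nia.
have hz : z = 0 by nia.
have hxx : x = 'C(l, 2) by nia.
by subst.
Qed.

Theorem lemma6 (l : nat) : 6 <= l ->
  optimal l 'C(l, 2) 0 0 l /\
  (forall x y z s, optimal l x y z s -> (x, y, z, s) = ('C(l, 2), 0, 0, l)).
Proof.
move=> hl.
have hb := two_bin2 l.
have hf : feasible l 'C(l, 2) 0 0 l by split; nia.
have ho : objective 'C(l, 2) 0 0 = 'C(l, 2) by rewrite /objective; nia.
split.
  split=> // x y z s hf'; rewrite ho; by case: (@key l x y z s hl hf').
move=> x y z s [hf' hmin].
have h1 := hmin _ _ _ _ hf. rewrite ho in h1.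
have [h2 h3] := @key l x y z s hl hf'.
apply: h3; apply/eqP; rewrite eqn_leq h2 h1.
done.
Qed.
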